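(* For every $(x,a)\in H\times\mathcal{A}$, the robust Q-function satisfies \[ Q^{\delta,\mathscr{P}}_{\pi}(x,a)=\inf_{\lambda\ge0}\Big[\lambda\delta+\sum_{y\in\mathcal{X}}\max_{l\in\mathcal{X}}\Big(-\lambda|l-y|+c(x,a,l)+\sum_{a'\in\mathcal{A}}Q^{\delta,\mathscr{P}}_{\pi}(l,a')\pi(a'|l)\Big)P_{x,a}(y)\Big], \] where $c(x,a,l)=1$ if $l\in U$ and $c(x,a,l)=0$ otherwise.
   Context: Consider a Markov decision process with a finite state set $\mathcal{X}$, viewed as a subset of $\mathbb{R}$ (so $|y-z|$ is the distance between states), and a finite action set $\mathcal{A}$. The state set is partitioned into a goal set $E$, a forbidden (unsafe) set $U$, and $H:=\mathcal{X}\setminus(E\cup U)$; $E$ and $U$ are terminal (the process stops there). For each $(x,a)\in H\times\mathcal{A}$ a nominal transition probability $\mathcal{P}_{x,a}=\{P_{x,a}(y)\}_{y\in\mathcal{X}}$ on $\mathcal{X}$ is given, and $\mathscr{P}=\{\mathcal{P}_{x,a}\}_{(x,a)\in H\times\mathcal{A}}$; transition probabilities are time-invariant. The sample space is $\Omega=(\mathcal{X}\times\mathcal{A})^{\infty}$ with coordinate processes $X_t,A_t$. A stationary policy is $\pi:\mathcal{X}\to\mathscr{M}(\mathcal{A})$, written $\pi(a|x)$. For any collection $\tilde{\mathscr{P}}=\{\tilde{\mathcal{P}}_{x,a}\}_{(x,a)\in H\times\mathcal{A}}$ of transition probabilities, $\mathbb{E}^{\tilde{\mathscr{P}}}_{\pi}$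 denotes expectation for the process with $X_{t+1}\sim\tilde{\mathcal{P}}_{X_t,A_t}$ and $A_t\sim\pi(\cdot|X_t)$ (except when $A_0$ is conditioned on). For $S\subseteq\mathcal{X}$, $\tau_S$ is the first hitting time of $S$, and $\tau=\tau_{E\cup U}$. The 1-Wasserstein distance between probability measures $\mu,\nu$ on $\mathcal{X}$ is $W(\mu,\nu)=\min\{\sum_{(y,z)}\Gamma(y,z)|y-z| : \Gamma\in\mathscr{M}(\mathcal{X}\times\mathcal{X}),\ \sum_z\Gamma(y,z)=\mu(y),\ \sum_y\Gamma(y,z)=\nu(z)\}$. For $\delta\ge0$, $\mathcal{D}^{\delta}_{x,a}=\{\tilde{\mathcal{P}}_{x,a}\in\mathscr{M}(\mathcal{X}): W(\tilde{\mathcal{P}}_{x,a},\mathcal{P}_{x,a})\le\delta\}$ and $\mathscr{D}^{\delta}=\prod_{(x,a)\in H\times\mathcal{A}}\mathcal{D}^{\delta}_{x,a}$. The robust Q-function is $Q^{\delta,\mathscr{P}}_{\pi}(x,a)=\sup_{\tilde{\mathscr{P}}\in\mathscr{D}^{\delta}}\mathbb{E}^{\tilde{\mathscr{P}}}_{\pi}\big[\sum_{t=0}^{\tau-1}c_{t+1}\mid X_0=x,A_0=a\big]$, where $c_{t+1}=1$ if $X_{t+1}\in U$ and $0$ otherwise; by the same formula (empty sum, since $\tau=0$), $Q^{\delta,\mathscr{P}}_{\pi}(l,a')=0$ for terminal states $l\in E\cup U$. *)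

(* Defs.v *)
From HB Require Import structures.
From mathcomp Require Import all_boot all_order all_algebra.
From mathcomp Require Import all_classical all_reals all_analysis.
Set Implicit Arguments. Unset Strict Implicit. Unset Printing Implicit Defensive.
Import Order.TTheory GRing.Theory Num.Theory.
Local Open Scope classical_set_scope.
Local Open Scope ring_scope.

Definition is_prob (R : realType) (T : finType) (p : T -> R) : Prop :=
  (forall t, 0 <= p t) /\ \sum_(t : T) p t = 1.

Definition coupling (R : realType) (X : finType) (mu nu : X -> R)
  (G : X -> X -> R) : Prop :=
  [/\ forall y z, 0 <= G y z,
      forall y, \sum_(z : X) G y z = mu y
    & forall z, \sum_(y : X) G y z = nu z].

(* 1-Wasserstein distance; states embedded in R via pos *)
Definition wass (R : realType) (X : finType) (pos : X -> R) (mu nu : X -> R)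
  : \bar R :=
  ereal_inf ((fun G : X -> X -> R =>
     (\sum_(y : X) \sum_(z : X) G y z * `|pos y - pos z|)%:E)
     @` [set G | coupling mu nu G]).

Definition Hset (X : finType) (E U : {set X}) : {set X} := ~: (E :|: U).

(* E^{Pt}_pi [ sum_{t=0}^{min(tau,n)-1} c_{t+1} | X0 = x, A0 = a ]
   (n-step truncation of the cumulative cost, by the Markov property) *)
Fixpoint Qfin (R : realType) (X A : finType) (E U : {set X})
  (pi : X -> A -> R) (Pt : X -> A -> X -> R) (n : nat) (x : X) (a : A) : R :=
  match n with
  | 0 => 0
  | n'.+1 =>
      if x \in Hset E U then
        \sum_(y : X) Pt x a y *
          ((y \in U)%:R + \sum_(a' : A) pi y a' * Qfin E U pi Pt n' y a')
      else 0
  end.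

(* Q-function under kernel Pt: the expectation of the full cumulative cost
   = monotone limit (sup) of the truncated expectations *)
Definition Qpol (R : realType) (X A : finType) (E U : {set X})
  (pi : X -> A -> R) (Pt : X -> A -> X -> R) (x : X) (a : A) : \bar R :=
  ereal_sup (range (fun n : nat => (Qfin E U pi Pt n x a)%:E)).

(* the ambiguity set D^delta (kernels only matter on H x A) *)
Definition ambiguity (R : realType) (X A : finType) (pos : X -> R)
  (E U : {set X}) (P : X -> A -> X -> R) (delta : R)
  (Pt : X -> A -> X -> R) : Prop :=
  forall x a, x \in Hset E U ->
    is_prob (Pt x a) /\ (wass pos (Pt x a) (P x a) <= delta%:E)%E.

Definition robustQ (R : realType) (X A : finType) (pos : X -> R)
  (E U : {set X}) (P : X -> A -> X -> R) (pi : X -> A -> R) (delta : R)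
  (x : X) (a : A) : \bar R :=
  ereal_sup ((fun Pt => Qpol E U pi Pt x a) @` [set Pt | ambiguity pos E U P delta Pt]).

Definition dual_obj (R : realType) (X A : finType) (pos : X -> R)
  (E U : {set X}) (P : X -> A -> X -> R) (pi : X -> A -> R) (delta : R)
  (x : X) (a : A) (lam : R) : \bar R :=
  ((lam * delta)%:E +
   \sum_(y : X)
     (\big[Order.max/-oo]_(l : X)
        ((- lam * `|pos l - pos y|)%:E + ((l \in U)%:R)%:E
         + \sum_(a' : A) robustQ pos E U P pi delta l a' * (pi l a')%:E))
     * (P x a y)%:E)%E.

Definition disjointEU (X : finType) (E U : {set X}) : bool := [disjoint E & U]%B.

(* Main.v *)
Set Warnings "-notation-overridden,-ambiguous-paths,-notation-incompatible-prefix".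
Require Import Defs.
From HB Require Import structures.
From mathcomp Require Import all_boot all_order all_algebra.
From mathcomp Require Import all_classical all_reals all_analysis.
From mathcomp Require Import ring lra.
Import Order.TTheory GRing.Theory Num.Theory.
Local Open Scope classical_set_scope.
Local Open Scope ring_scope.
Set Implicit Arguments. Unset Strict Implicit.

Section Main.
Variables (R : realType) (X A : finType) (pos : X -> R)
  (E U : {set X}) (P : X -> A -> X -> R) (pi : X -> A -> R) (delta : R).
Hypotheses (pos_inj : injective pos)
  (P_prob : forall x a, x \in Hset E U -> is_prob (P x a))
  (pi_prob : forall x, is_prob (pi x))
  (delta_ge0 : 0 <= delta).

Local Notation H := (Hset E U).
Definition cU (y : X) : R := (y \in U)%:R.

Definition step (g : R) (p : X -> R) (Q : X -> A -> R) : R :=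
  \sum_(y : X) p y * (cU y + g * \sum_(a' : A) pi y a' * Q y a').

Definition good (Q : X -> A -> R) : Prop :=
  (forall y a, 0 <= Q y a <= 1) /\ (forall y a, y \notin H -> Q y a = 0).

Lemma U_notH y : y \in U -> y \notin H.
Proof. by move=> yU; rewrite /Hset !inE yU orbT. Qed.

Lemma piQ_bounds Q y : good Q ->
  0 <= \sum_(a' : A) pi y a' * Q y a' <= 1.
Proof.
move=> [QB _]; have [pi0 pi1] := pi_prob y.
apply/andP; split.
  by apply: sumr_ge0 => a' _; apply: mulr_ge0 => //; case/andP: (QB y a').
rewrite -pi1; apply: ler_sum => a' _.
by rewrite ler_piMr //; case/andP: (QB y a').
Qed.

Lemma bracket_bounds g Q y : good Q -> 0 <= g <= 1 ->
  0 <= cU y + g * \sum_(a' : A) pi y a' * Q y a' <= 1.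
Proof.
move=> hQ /andP[g0 g1]; have /andP[s0 s1] := piQ_bounds y hQ.
rewrite /cU; case: (boolP (y \in U)) => yU.
  have -> : \sum_(a' : A) pi y a' * Q y a' = 0.
    by apply: big1 => a' _; rewrite hQ.2 ?mulr0 // U_notH.
  by rewrite mulr0 addr0 lexx ler01.
rewrite add0r; apply/andP; split; first exact: mulr_ge0.
by rewrite -[1]mulr1; apply: ler_pM.
Qed.

Lemma step_bounds g p Q : is_prob p -> good Q -> 0 <= g <= 1 ->
  0 <= step g p Q <= 1.
Proof.
move=> [p0 p1] hQ hg; apply/andP; split.
  apply: sumr_ge0 => y _; apply: mulr_ge0 => //.
  by case/andP: (bracket_bounds y hQ hg).
rewrite -p1; apply: ler_sum => y _.
by rewrite ler_piMr //; case/andP: (bracket_bounds y hQ hg).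
Qed.

Lemma step_mono g p Q Q' : (forall t, 0 <= p t) -> 0 <= g ->
  (forall y a, Q y a <= Q' y a) -> step g p Q <= step g p Q'.
Proof.
move=> p0 g0 QQ; apply: ler_sum => y _; apply: ler_wpM2l => //.
rewrite lerD2l; apply: ler_wpM2l => //; apply: ler_sum => a' _.
by apply: ler_wpM2l => //; case: (pi_prob y) => h _; exact: h.
Qed.

Lemma step_ge0 g p Q : (forall t, 0 <= p t) -> 0 <= g ->
  (forall y a, 0 <= Q y a) -> 0 <= step g p Q.
Proof.
move=> p0 g0 Q0; apply: sumr_ge0 => y _; apply: mulr_ge0 => //.
apply: addr_ge0; first by rewrite /cU ler0n.
apply: mulr_ge0 => //; apply: sumr_ge0 => a' _; apply: mulr_ge0 => //.
by case: (pi_prob y) => h _; exact: h.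
Qed.

Lemma step_shift g p Q r : is_prob p ->
  step g p (fun y a => Q y a + r) = step g p Q + g * r.
Proof.
move=> [p0 p1]; rewrite /step.
have E1 y : \sum_(a' : A) pi y a' * (Q y a' + r) =
            \sum_(a' : A) pi y a' * Q y a' + r.
  have [_ h1] := pi_prob y.
  by rewrite -[r in RHS]mul1r -h1 mulr_suml -big_split /=; apply: eq_bigr => a' _; rewrite mulrDr.
under eq_bigr => y _ do rewrite E1 [g * (_ + r)]mulrDr addrA [p y * (_ + g * r)]mulrDr.
rewrite big_split /=; congr (_ + _); by rewrite -mulr_suml p1 mul1r.
Qed.

Lemma step_gamma_le g p Q : (forall t, 0 <= p t) -> 0 <= g <= 1 ->
  (forall y a, 0 <= Q y a) -> step g p Q <= step 1 p Q.
Proof.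
move=> p0 /andP[g0 g1] Q0; apply: ler_sum => y _; apply: ler_wpM2l => //.
rewrite lerD2l mul1r ler_piMl //.
apply: sumr_ge0 => a' _; apply: mulr_ge0 => //.
by case: (pi_prob y) => h _; exact: h.
Qed.


Lemma sum_delta (T : finType) (y : T) (F : T -> R) :
  \sum_(z : T) (y == z)%:R * F z = F y.
Proof.
rewrite (bigD1 y) //= eqxx mul1r big1 ?addr0 // => z zy.
by rewrite eq_sym (negbTE zy) mul0r.
Qed.

Lemma sum_delta' (T : finType) (y : T) (F : T -> R) :
  \sum_(z : T) (z == y)%:R * F z = F y.
Proof.
by rewrite -[RHS](sum_delta y F); apply: eq_bigr => z _; rewrite eq_sym.
Qed.

Definition B x a : set (X -> R) :=
  [set p | is_prob p /\ (wass pos p (P x a) <= delta%:E)%E].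

Lemma P_in_B x a : x \in H -> B x a (P x a).
Proof.
move=> xH; split; first exact: P_prob.
apply: (@le_trans _ _ 0%:E); last by rewrite lee_fin.
apply: ereal_inf_lbound.
exists (fun y z => (y == z)%:R * P x a y).
  have [p0 p1] := P_prob a xH; split.
  - by move=> y z; apply: mulr_ge0 => //; rewrite ler0n.
  - by move=> y; exact: (sum_delta y (fun _ => P x a y)).
  - move=> z; exact: sum_delta'.
congr (_%:E); apply: big1 => y _; apply: big1 => z _.
case: (eqVneq y z) => [->|_]; first by rewrite subrr normr0 mulr0.
by rewrite mul0r mul0r.
Qed.

Definition Top g Q x a : R :=
  if x \in H then sup [set step g p Q | p in B x a] else 0.

Lemma Top_has_sup x a g Q : x \in H -> good Q -> 0 <= g <= 1 ->
  has_sup [set step g p Q | p in B x a].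
Proof.
move=> xH hQ hg; split; first by exists (step g (P x a) Q); exists (P x a) => //; exact: P_in_B.
exists 1 => _ [q [qp _] <-]; by case/andP: (step_bounds qp hQ hg).
Qed.

Lemma Top_ub x a g Q p : x \in H -> good Q -> 0 <= g <= 1 -> B x a p ->
  step g p Q <= Top g Q x a.
Proof.
move=> xH hQ hg pB; rewrite /Top xH.
by apply: sup_upper_bound; [exact: Top_has_sup | exists p].
Qed.

Lemma Top_le x a g Q r : x \in H ->
  (forall p, B x a p -> step g p Q <= r) -> Top g Q x a <= r.
Proof.
move=> xH h; rewrite /Top xH; apply: ge_sup.
  by exists (step g (P x a) Q); exists (P x a) => //; exact: P_in_B.
by move=> _ [q qB <-]; exact: h.
Qed.

Lemma Top_adh x a g Q eta : x \in H -> good Q -> 0 <= g <= 1 -> 0 < eta ->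
  exists p, B x a p /\ Top g Q x a - eta < step g p Q.
Proof.
move=> xH hQ hg he; have [_ [p pB <-] lt] := sup_adherent he (Top_has_sup a xH hQ hg).
by exists p; rewrite /Top xH.
Qed.

Lemma Top_good g Q : good Q -> 0 <= g <= 1 -> good (Top g Q).
Proof.
move=> hQ hg; split; last by move=> y a yH; rewrite /Top (negbTE yH).
move=> y a; case: (boolP (y \in H)) => yH; last by rewrite /Top (negbTE yH) lexx ler01.
apply/andP; split.
  apply: le_trans (Top_ub yH hQ hg (P_in_B a yH)).
  by case/andP: (step_bounds (P_prob a yH) hQ hg).
by apply: Top_le => // p [pp _]; case/andP: (step_bounds pp hQ hg).
Qed.

Lemma Top_mono g Q Q' : good Q' -> 0 <= g <= 1 ->
  (forall y a, Q y a <= Q' y a) -> forall x a, Top g Q x a <= Top g Q' x a.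
Proof.
move=> hQ' hg QQ x a; case: (boolP (x \in H)) => xH; last by rewrite /Top (negbTE xH).
apply: Top_le => // p pB; apply: le_trans (Top_ub xH hQ' hg pB).
apply: step_mono => //; [by case: pB => -[]|by case/andP: hg].
Qed.

Definition vseq g n : X -> A -> R := iter n (Top g) (fun _ _ => 0).

Lemma good0 : good (fun _ _ => 0).
Proof. by split => // y a; rewrite lexx ler01. Qed.

Lemma vseq_good g n : 0 <= g <= 1 -> good (vseq g n).
Proof. by move=> hg; elim: n => [|n IH] /=; [exact: good0 | exact: Top_good]. Qed.

Lemma vseq_mono1 g n : 0 <= g <= 1 -> forall y a, vseq g n y a <= vseq g n.+1 y a.
Proof.
move=> hg; elim: n => [|n IH] y a /=.
  by have [h _] := Top_good good0 hg; case/andP: (h y a).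
by apply: Top_mono => //; exact: (vseq_good n.+1 hg).
Qed.

Lemma vseq_mono g n m : 0 <= g <= 1 -> (n <= m)%N -> forall y a, vseq g n y a <= vseq g m y a.
Proof.
move=> hg; elim: m => [|m IH]; first by rewrite leqn0 => /eqP -> y a.
rewrite leq_eqVlt => /orP[/eqP -> //|]; rewrite ltnS => nm y a.
exact: le_trans (IH nm y a) (vseq_mono1 m hg y a).
Qed.


Local Notation amb := (ambiguity pos E U P delta).
Local Notation Qf := (Qfin E U pi).
Local Notation rQ := (robustQ pos E U P pi delta).

Lemma hg1 : 0 <= (1:R) <= 1.
Proof. by rewrite ler01 lexx. Qed.

Lemma Qfin_S Pt n x a : Qf Pt n.+1 x a =
  if x \in H then step 1 (Pt x a) (Qf Pt n) else 0.
Proof. by rewrite /=; case: ifP => // _; apply: eq_bigr => y _; rewrite mul1r. Qed.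

Lemma amb_P : amb P.
Proof. by move=> x a xH; exact: P_in_B. Qed.

Lemma amb_B Pt x a : amb Pt -> x \in H -> B x a (Pt x a).
Proof. by move=> h xH; exact: h. Qed.

Lemma Qfin_le_v Pt n : amb Pt -> forall x a, Qf Pt n x a <= vseq 1 n x a.
Proof.
move=> hPt; elim: n => [|n IH] x a; first by rewrite /= lexx.
rewrite Qfin_S /= /Top; case: ifP => xH; last by rewrite lexx.
have pB := amb_B a hPt xH.
apply: le_trans (_ : step 1 (Pt x a) (vseq 1 n) <= _).
  by apply: step_mono => //; case: pB => -[].
by have := Top_ub xH (vseq_good n hg1) hg1 pB; rewrite /Top xH.
Qed.

Lemma Qfin_offH Pt n x a : x \notin H -> Qf Pt n x a = 0.
Proof. by case: n => [|n] //= xH; rewrite (negbTE xH). Qed.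

Lemma rQ_le x a r : (forall Pt, amb Pt -> forall n, Qf Pt n x a <= r) ->
  (rQ x a <= r%:E)%E.
Proof.
move=> h; apply: ge_ereal_sup => _ [Pt hPt <-].
by apply: ge_ereal_sup => _ [n _ <-]; rewrite lee_fin; exact: h.
Qed.

Lemma rQ_ge x a Pt n : amb Pt -> ((Qf Pt n x a)%:E <= rQ x a)%E.
Proof.
move=> hPt; apply: le_trans (_ : (Qpol E U pi Pt x a <= _)%E).
  by apply: ereal_sup_ubound; exists n.
by apply: ereal_sup_ubound; exists Pt.
Qed.

Definition vsup x a := sup (range (fun n => vseq 1 n x a)).

Lemma vsup_has x a : has_sup (range (fun n => vseq 1 n x a)).
Proof.
split; first by exists (vseq 1 0 x a); exists 0%N.
exists 1 => _ [n _ <-]; have [h _] := vseq_good n hg1; by case/andP: (h x a).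
Qed.

Lemma v_le_vsup n x a : vseq 1 n x a <= vsup x a.
Proof. by apply: sup_upper_bound; [exact: vsup_has | exists n]. Qed.

Lemma rQ_le_vsup x a : (rQ x a <= (vsup x a)%:E)%E.
Proof. apply: rQ_le => Pt hPt n; exact: le_trans (Qfin_le_v n hPt x a) (v_le_vsup n x a). Qed.

Lemma rQ_ge0 x a : (0 <= rQ x a)%E.
Proof. exact: (rQ_ge x a 0 amb_P). Qed.

Lemma rQ_fin x a : rQ x a = (fine (rQ x a))%:E.
Proof.
have h : rQ x a \is a fin_num.
  by rewrite ge0_fin_numE ?rQ_ge0 // (le_lt_trans (rQ_le_vsup x a)) ?ltry.
by rewrite fineK.
Qed.

Definition RQ x a := fine (rQ x a).

Lemma RQ_good : good RQ.
Proof.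
split.
  move=> y a; apply/andP; split.
    by rewrite -lee_fin -rQ_fin rQ_ge0.
  rewrite -lee_fin -rQ_fin; apply: rQ_le => Pt hPt n.
  have [h _] := vseq_good n hg1; apply: le_trans (Qfin_le_v n hPt y a) _.
  by case/andP: (h y a).
move=> y a yH; apply/eqP; rewrite eq_le; apply/andP; split.
  rewrite -lee_fin -rQ_fin; apply: rQ_le => Pt _ n; by rewrite Qfin_offH.
by rewrite -lee_fin -rQ_fin rQ_ge0.
Qed.

Lemma Qfin_le_RQ Pt n x a : amb Pt -> Qf Pt n x a <= RQ x a.
Proof. by move=> hPt; rewrite -lee_fin /RQ -rQ_fin; exact: rQ_ge. Qed.

Lemma RQ_le_vsup x a : RQ x a <= vsup x a.
Proof. by rewrite -lee_fin /RQ -rQ_fin; exact: rQ_le_vsup. Qed.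


Definition TS g (sg : X -> A -> X -> R) Q x a : R :=
  if x \in H then step g (sg x a) Q else 0.

Lemma TS_shift g sg Q Q' r : amb sg -> 0 <= g -> 0 <= r ->
  (forall y a, Q y a <= Q' y a + r) ->
  forall x a, TS g sg Q x a <= TS g sg Q' x a + g * r.
Proof.
move=> hs g0 r0 QQ x a; rewrite /TS; case: ifP => xH; last by rewrite add0r mulr_ge0.
have [pp _] := amb_B a hs xH.
rewrite -step_shift //; apply: step_mono => //; by case: pp.
Qed.

Lemma TS_iter_shift g sg n Q Q' r : amb sg -> 0 <= g -> 0 <= r ->
  (forall y a, Q y a <= Q' y a + r) ->
  forall x a, iter n (TS g sg) Q x a <= iter n (TS g sg) Q' x a + g ^+ n * r.
Proof.
move=> hs g0; elim: n r Q Q' => [|n IH] r Q Q' r0 QQ x a /=; first by rewrite expr0 mul1r.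
have := TS_shift hs g0 (_ : 0 <= g ^+ n * r) (IH r Q Q' r0 QQ) x a.
by rewrite exprS mulrA; apply; apply: mulr_ge0 => //; apply: exprn_ge0.
Qed.

Lemma TS_iter0 g sg n : amb sg -> 0 <= g <= 1 ->
  forall x a, 0 <= iter n (TS g sg) (fun _ _ => 0) x a /\
              iter n (TS g sg) (fun _ _ => 0) x a <= Qf sg n x a.
Proof.
move=> hs hg; have [g0 g1] := andP hg.
elim: n => [|n IH] x a; first by rewrite /= lexx.
rewrite Qfin_S /= {1 3}/TS; case: ifP => xH; last by rewrite lexx.
have [[p0 _] _] := amb_B a hs xH.
split; first by apply: step_ge0 => // y b; case: (IH y b).
apply: le_trans (step_gamma_le p0 hg _) _; first by move=> y b; case: (IH y b).
apply: step_mono => // y b; by case: (IH y b).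
Qed.

Lemma vseq_scaled g k : 0 < g <= 1 ->
  forall x a, g ^+ k * vseq 1 k x a <= vseq g k x a.
Proof.
move=> /andP[g0 g1]; have hg : 0 <= g <= 1 by rewrite ltW.
elim: k => [|k IH] x a; first by rewrite /= mulr0 lexx.
set Q'' := fun y b => g ^+ k * vseq 1 k y b.
have gQ : good Q''.
  split=> [y b|y b yH]; last by rewrite /Q'' (vseq_good k hg1).2 // mulr0.
  have [h _] := vseq_good k hg1; have /andP[v0 v1] := h y b.
  have gk1 : g ^+ k <= 1 by apply: exprn_ile1 => //; exact: ltW.
  apply/andP; split; first by apply: mulr_ge0 => //; apply: exprn_ge0; exact: ltW.
  by rewrite -[1]mul1r; apply: ler_pM => //; apply: exprn_ge0; exact: ltW.
apply: le_trans (Top_mono (vseq_good k hg) hg IH x a).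
rewrite /=; case: (boolP (x \in H)) => xH; last by rewrite /Top (negbTE xH) mulr0.
have gk0 : 0 < g ^+ k.+1 by apply: exprn_gt0.
rewrite mulrC -ler_pdivlMr //.
apply: Top_le => // p pB; rewrite ler_pdivlMr //.
apply: le_trans (Top_ub xH gQ hg pB).
have [[p0 _] _] := pB.
rewrite /step mulr_suml; apply: ler_sum => y _; rewrite -mulrA; apply: ler_wpM2l => //.
have -> : \sum_(a' : A) pi y a' * Q'' y a' = g ^+ k * \sum_(a' : A) pi y a' * vseq 1 k y a'.
  by rewrite mulr_sumr; apply: eq_bigr => b _; rewrite /Q'' mulrCA.
rewrite mul1r mulrDl mulrA -exprS [X in _ <= _ + X]mulrC lerD2r.
have gk1 : g ^+ k.+1 <= 1 by apply: exprn_ile1 => //; exact: ltW.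
by rewrite ler_piMr // /cU ler0n.
Qed.


Lemma disc g N n eta x0 a0 : 0 < g < 1 -> 0 < eta ->
  g ^+ N * vseq 1 N x0 a0 - eta - g ^+ n <= RQ x0 a0.
Proof.
move=> /andP[g0 g1] he.
have hg : 0 <= g <= 1 by rewrite !ltW.
set w := vseq g N.
have hw : good w := vseq_good N hg.
set eta' := eta * (1 - g).
have he' : 0 < eta' by rewrite mulr_gt0 // subr_gt0.
have hc : forall xa : X * A, exists p : X -> R,
   (xa.1 \in H -> B xa.1 xa.2 p /\ Top g w xa.1 xa.2 - eta' < step g p w).
  move=> [x a] /=; case: (boolP (x \in H)) => xH.
    by have [p [pB lt]] := Top_adh a xH hw hg he'; exists p.
  by exists (P x a).
have [f hf] := choice hc.
pose sg x a := f (x, a).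
have hs : amb sg by move=> x a xH; have [] := hf (x, a) xH.
have Tw : forall x a, w x a - eta' <= TS g sg w x a.
  move=> x a; rewrite /TS; case: ifP => xH.
    have [_ lt] := hf (x, a) xH.
    apply: le_trans (ltW lt); rewrite lerD2r.
    exact: (vseq_mono1 N hg x a).
  by rewrite hw.2 ?(negbT xH) // sub0r oppr_le0 ltW.
have low : forall m x a, w x a - eta <= iter m (TS g sg) w x a.
  elim=> [|m IH] x a /=; first by rewrite lerBlDr lerDl ltW.
  have hh : forall y b, w y b <= iter m (TS g sg) w y b + eta.
    by move=> y b; rewrite -lerBlDr; exact: IH.
  have h1 := TS_shift hs (ltW g0) (ltW he) hh x a.
  have h2 := Tw x a.
  have e : eta = eta' + g * eta by rewrite /eta'; ring.
  rewrite e; lra.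
have up : forall m x a, iter m (TS g sg) w x a <= iter m (TS g sg) (fun _ _ => 0) x a + g ^+ m * 1.
  move=> m; apply: TS_iter_shift => //; try exact: ltW; try exact: ler01.
  by move=> y b; rewrite add0r; case/andP: (hw.1 y b).
have sc := vseq_scaled N (_ : 0 < g <= 1) x0 a0.
have [_ q] := TS_iter0 n hs hg x0 a0.
have q2 := Qfin_le_RQ n x0 a0 hs.
have l1 := low n x0 a0.
have u1 := up n x0 a0.
have {}sc := sc (ltac:(by rewrite g0 ltW)).
rewrite mulr1 in u1.
move: sc q q2 l1 u1; rewrite -/w; lra.
Qed.


Lemma bern (s : R) n : 0 <= s -> 1 + n%:R * s <= (1 + s) ^+ n.
Proof.
move=> s0; elim: n => [|n IH]; first by rewrite mul0r addr0 expr0.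
rewrite exprS -natr1.
have h : (1 + s) * (1 + n%:R * s) <= (1 + s) * (1 + s) ^+ n.
  by apply: ler_wpM2l => //; rewrite addr_ge0.
apply: le_trans h; have n0 : 0 <= n%:R :> R by rewrite ler0n.
nra.
Qed.

Lemma bern2 (t : R) n : 0 <= t <= 1 -> 1 - n%:R * t <= (1 - t) ^+ n.
Proof.
move=> /andP[t0 t1]; elim: n => [|n IH]; first by rewrite mul0r subr0 expr0.
rewrite exprS -natr1.
have h : (1 - t) * (1 - n%:R * t) <= (1 - t) * (1 - t) ^+ n.
  by apply: ler_wpM2l => //; rewrite subr_ge0.
apply: le_trans h; have n0 : 0 <= n%:R :> R by rewrite ler0n.
nra.
Qed.

Lemma v_le_RQ k x a : vseq 1 k x a <= RQ x a.
Proof.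
apply/ler_addgt0Pr => e e0.
set e1 := Num.min e 1.
have e10 : 0 < e1 by rewrite lt_min e0 ltr01.
have e1e : e1 <= e by rewrite ge_min lexx.
have e11 : e1 <= 1 by rewrite ge_min lexx orbT.
have kpos : 0 < (k.+1)%:R :> R by rewrite ltr0Sn.
set t := e1 / (3 * (k.+1)%:R).
have t0 : 0 < t by rewrite divr_gt0 // mulr_gt0.
have tk : t * (k.+1)%:R * 3 = e1.
  rewrite /t; field.
  by rewrite addrC natr1 pnatr_eq0.
have k1 : 1 <= (k.+1)%:R :> R by rewrite ler1n.
have kk : (k%:R : R) + 1 = (k.+1)%:R by rewrite natr1.
have kt : (k%:R) * t <= e1 / 3.
  have -> : e1 / 3 = t * (k.+1)%:R by rewrite -tk; field.
  rewrite -kk; lra.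
have t13 : t <= 1 / 3 by nra.
set g := 1 - t.
have hg : 0 < g < 1 by apply/andP; split; rewrite /g; lra.
set n := (Num.truncn (3 / (e1 * t))).+1.
have hn : 3 / (e1 * t) < n%:R := truncnS_gt _.
have gn : g ^+ n <= e1 / 3.
  have b := bern n (ltW t0).
  have p1 : g ^+ n * (1 + t) ^+ n <= 1.
    rewrite -exprMn; apply: exprn_ile1; rewrite /g; nra.
  have gn0 : 0 <= g ^+ n by apply: exprn_ge0; case/andP: hg => /ltW.
  have p2 : g ^+ n * (1 + n%:R * t) <= 1.
    by apply: le_trans p1; apply: ler_wpM2l.
  have p3 : 3 / e1 < n%:R * t.
    have q : 3 / (e1 * t) * t = 3 / e1 by field; rewrite ?gt_eqF //.
    by rewrite -q ltr_pM2r.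
  have p4 : (3 / e1) * e1 = 3 by field; rewrite gt_eqF.
  rewrite ler_pdivlMr //; set c := 3 / e1 in p3 p4.
  have q1 : g ^+ n * c <= 1.
    apply: le_trans p2; apply: ler_wpM2l => //; lra.
  have q2 : g ^+ n * c * e1 <= e1 by rewrite ler_piMl // ltW.
  by rewrite -mulrA p4 in q2.
have e3 : 0 < e1 / 3 by rewrite divr_gt0.
have d := disc k n x a hg e3.
have gk := bern2 k (_ : 0 <= t <= 1).
have {}gk := gk (ltac:(apply/andP; split; lra)).
have [hv _] := vseq_good k hg1; have /andP[v0 v1] := hv x a.
have m : (1 - g ^+ k) * vseq 1 k x a <= k%:R * t.
  apply: le_trans (_ : (1 - g ^+ k) * 1 <= _); first apply: ler_wpM2l => //.
    by rewrite subr_ge0 exprn_ile1 //; case/andP: hg => /ltW ? /ltW.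
  by rewrite mulr1; rewrite -/g in gk; lra.
rewrite mulrBl mul1r in m.
lra.
Qed.


Lemma bellman_lower x0 a0 p : x0 \in H -> B x0 a0 p -> step 1 p RQ <= RQ x0 a0.
Proof.
move=> xH pB; apply/ler_addgt0Pr => e e0.
have hK : forall xa : X * A, exists K : nat, RQ xa.1 xa.2 <= vseq 1 K xa.1 xa.2 + e.
  move=> [y b] /=; have [_ [K _ <-] lt] := sup_adherent e0 (vsup_has y b).
  exists K; have := RQ_le_vsup y b; rewrite /vsup in lt *; lra.
have [Kf hKf] := choice hK.
set K := (\max_(i : X * A) Kf i)%N.
have unif : forall y b, RQ y b <= vseq 1 K y b + e.
  move=> y b; apply: le_trans (hKf (y, b)) _; rewrite lerD2r.
  apply: vseq_mono; [exact: hg1 | exact: (leq_bigmax (y, b))].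
have [[p0 _] _] := pB.
apply: le_trans (_ : step 1 p (fun y b => vseq 1 K y b + e) <= _).
  exact: step_mono.
rewrite step_shift; last by case: pB.
rewrite mul1r lerD2r.
apply: le_trans (Top_ub xH (vseq_good K hg1) hg1 pB) _.
exact: (v_le_RQ K.+1 x0 a0).
Qed.


Definition f (l : X) : R := (l \in U)%:R + \sum_(a' : A) RQ l a' * pi l a'.
Definition gfun (lam : R) (y l : X) : R :=
  - lam * `|pos l - pos y| + (l \in U)%:R + \sum_(a' : A) RQ l a' * pi l a'.

Lemma f_gfun lam y l : f l = gfun lam y l + lam * `|pos l - pos y|.
Proof. rewrite /f /gfun; ring. Qed.

Lemma step1_f p : step 1 p RQ = \sum_(l : X) p l * f l.
Proof.
apply: eq_bigr => l _; rewrite mul1r /f /cU; congr (_ * (_ + _)).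
by apply: eq_bigr => b _; rewrite mulrC.
Qed.

Lemma weak_dual x a p lam (s : X -> X) : B x a p -> 0 <= lam ->
  (forall y l, gfun lam y l <= gfun lam y (s y)) ->
  \sum_(l : X) p l * f l <= lam * delta + \sum_(y : X) gfun lam y (s y) * P x a y.
Proof.
move=> [[p0 p1] hw] lam0 hs; apply/ler_addgt0Pr => e e0.
set eps := e / (lam + 1).
have lam1 : 0 < lam + 1 by rewrite ltr_wpDl.
have eps0 : 0 < eps by rewrite divr_gt0.
have epsE : lam * eps + eps = e by rewrite /eps; field; rewrite gt_eqF.
have hlt : (wass pos p (P x a) < (delta + eps)%:E)%E.
  by apply: le_lt_trans hw _; rewrite lte_fin ltrDl.
have [_ [G [G0 Gr Gc] <-] ltG] := ereal_inf_lt hlt.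
rewrite lte_fin in ltG.
set cost := \sum_(y : X) \sum_(z : X) G y z * `|pos y - pos z| in ltG.
have h1 : \sum_(l : X) p l * f l = \sum_(l : X) \sum_(y : X) G l y * f l.
  by apply: eq_bigr => l _; rewrite -Gr mulr_suml.
have h2 : \sum_(l : X) \sum_(y : X) G l y * f l <=
    \sum_(l : X) \sum_(y : X) (G l y * gfun lam y (s y) + lam * (G l y * `|pos l - pos y|)).
  apply: ler_sum => l _; apply: ler_sum => y _.
  rewrite mulrCA -mulrDr; apply: ler_wpM2l => //.
  rewrite (f_gfun lam y l) lerD2r; exact: hs.
have h3 : \sum_(l : X) \sum_(y : X) (G l y * gfun lam y (s y) + lam * (G l y * `|pos l - pos y|))
    = \sum_(y : X) gfun lam y (s y) * P x a y + lam * cost.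
  under eq_bigr => l _ do rewrite big_split /=.
  rewrite big_split /=; congr (_ + _); last first.
    by rewrite /cost mulr_sumr; apply: eq_bigr => l _; rewrite mulr_sumr.
  rewrite exchange_big /=; apply: eq_bigr => y _.
  by rewrite -Gc mulr_sumr; apply: eq_bigr => l _; rewrite mulrC.
have h4 : lam * cost <= lam * (delta + eps) by apply: ler_wpM2l => //; exact: ltW.
rewrite mulrDr in h4.
lra.
Qed.

Lemma mixsum x a (s t : X -> X) th (K : X -> R) y :
  \sum_(l : X) P x a y * (th * (s y == l)%:R + (1 - th) * (t y == l)%:R) * K l =
  P x a y * (th * K (s y) + (1 - th) * K (t y)).
Proof.
transitivity (\sum_(l : X) ((s y == l)%:R * (P x a y * th * K l) +
                            (t y == l)%:R * (P x a y * (1 - th) * K l))).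
  by apply: eq_bigr => l _; ring.
rewrite big_split /= (sum_delta (s y) (fun l => P x a y * th * K l))
  (sum_delta (t y) (fun l => P x a y * (1 - th) * K l)); ring.
Qed.

Definition FF x a (s : {ffun X -> X}) : R := \sum_(y : X) P x a y * f (s y).
Definition CC x a (s : {ffun X -> X}) : R := \sum_(y : X) P x a y * `|pos (s y) - pos y|.

Lemma mix x a th (s t : {ffun X -> X}) : x \in H -> 0 <= th <= 1 ->
  th * CC x a s + (1 - th) * CC x a t <= delta ->
  exists p, B x a p /\ \sum_(l : X) p l * f l = th * FF x a s + (1 - th) * FF x a t.
Proof.
move=> xH /andP[th0 th1] hC; have [P0 P1] := P_prob a xH.
pose G l y := P x a y * (th * (s y == l)%:R + (1 - th) * (t y == l)%:R).
have G0 : forall l y, 0 <= G l y.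
  move=> l y; apply: mulr_ge0 => //; apply: addr_ge0; apply: mulr_ge0 => //;
  by rewrite ?subr_ge0 ?ler0n.
have Gc : forall y, \sum_(l : X) G l y = P x a y.
  move=> y; have := mixsum x a s t th (fun _ => 1) y.
  under eq_bigr => l _ do rewrite mulr1.
  move=> ->; ring.
exists (fun l => \sum_(y : X) G l y); split; last first.
  under eq_bigr => l _ do rewrite mulr_suml.
  rewrite exchange_big /=.
  under eq_bigr => y _ do rewrite (mixsum x a s t th f y).
  rewrite /FF !mulr_sumr -big_split /=; apply: eq_bigr => y _; ring.
split.
  split; first by move=> l; apply: sumr_ge0 => y _.
  by rewrite exchange_big /=; under eq_bigr => y _ do rewrite Gc.
apply: (@le_trans _ _ (th * CC x a s + (1 - th) * CC x a t)%:E); last by rewrite lee_fin.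
apply: ereal_inf_lbound; exists G => //.
congr (_%:E).
rewrite exchange_big /=.
under eq_bigr => y _ do rewrite (mixsum x a s t th (fun l => `|pos l - pos y|) y).
rewrite /CC !mulr_sumr -big_split /=; apply: eq_bigr => y _; ring.
Qed.


Lemma exists_argmax_cond (T : finType) (Pr : pred T) (F : T -> R) (i0 : T) :
  Pr i0 -> exists i, Pr i /\ forall j, Pr j -> F j <= F i.
Proof.
move=> h; case: (@arg_maxP _ R T i0 Pr F h) => i Pi hi.
by exists i; split.
Qed.

Lemma exists_argmax (T : finType) (F : T -> R) (i0 : T) :
  exists i, forall j, F j <= F i.
Proof.
have [i [_ h]] := @exists_argmax_cond T predT F i0 isT.
by exists i => j; exact: h.
Qed.

Lemma strong_dual x a : x \in H -> exists lam, 0 <= lam /\ exists p, B x a p /\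
  forall s : {ffun X -> X}, FF x a s + lam * (delta - CC x a s) <= \sum_(l : X) p l * f l.
Proof.
move=> xH; have [P0 P1] := P_prob a xH.
pose id0 : {ffun X -> X} := [ffun y => y].
have C0 : CC x a id0 = 0.
  by apply: big1 => y _; rewrite ffunE subrr normr0 mulr0.
have CCge0 : forall s, 0 <= CC x a s.
  by move=> s; apply: sumr_ge0 => y _; apply: mulr_ge0.
pose val (ab : {ffun X -> X} * {ffun X -> X}) :=
  if CC x a ab.2 <= delta then FF x a ab.1 else
  (FF x a ab.1 * (CC x a ab.2 - delta) + FF x a ab.2 * (delta - CC x a ab.1))
    / (CC x a ab.2 - CC x a ab.1).
pose feas (ab : {ffun X -> X} * {ffun X -> X}) := CC x a ab.1 <= delta.
have [[a1 b1] [/= fa hmax]] := @exists_argmax_cond _ feas val (id0, id0)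
  (ltac:(by rewrite /feas /= C0)).
set V := val (a1, b1).
have achieve : exists p, B x a p /\ \sum_(l : X) p l * f l = V.
  rewrite /V /val /=; case: ifP => hb.
    have [p [pB pv]] := mix (a:=a) (th:=1) (s:=a1) (t:=a1) xH (ltac:(by rewrite ler01 lexx)) (ltac:(by rewrite subrr mul0r addr0 mul1r; exact: fa)).
    by exists p; split => //; rewrite pv subrr mul0r addr0 mul1r.
  move/negbT: hb; rewrite -ltNge => hb.
  have den : 0 < CC x a b1 - CC x a a1 by rewrite subr_gt0; apply: le_lt_trans hb.
  set th := (CC x a b1 - delta) / (CC x a b1 - CC x a a1).
  have th0 : 0 <= th by apply: divr_ge0; [rewrite subr_ge0; exact: ltW | exact: ltW].
  have th1 : th <= 1 by rewrite ler_pdivrMr // mul1r; move: fa; rewrite /feas /=; lra.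
  have hC : th * CC x a a1 + (1 - th) * CC x a b1 = delta.
    rewrite /th; field; by rewrite gt_eqF.
  have [p [pB pv]] := mix (a:=a) (th:=th) (s:=a1) (t:=b1) xH (ltac:(by rewrite th0 th1)) (ltac:(by rewrite hC)).
  exists p; split => //; rewrite pv /th; field; by rewrite gt_eqF.
have [p [pB pv]] := achieve.
pose lam := \big[Num.max/0]_(b : {ffun X -> X} | delta < CC x a b)
               ((FF x a b - V) / (CC x a b - delta)).
exists lam; split.
  rewrite /lam; elim/big_rec: _ => // i z _ hz; by rewrite le_max hz orbT.
exists p; split => //; rewrite pv => s.
case: (leP (CC x a s) delta) => hs.
  have Vs : FF x a s <= V.
    have := hmax (s, s) hs; by rewrite /val /= hs.
  suff : lam * (delta - CC x a s) <= V - FF x a s by lra.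
  rewrite /lam; elim/big_ind: _ => //.
    by rewrite mul0r subr_ge0.
    move=> u v hu hv /=; by rewrite maxr_pMl ?subr_ge0 // ge_max hu hv.
  move=> b hb.
  have := hmax (s, b) hs; rewrite /val /= (leNgt (CC x a b)) hb /=.
  have den : 0 < CC x a b - CC x a s by rewrite subr_gt0; apply: le_lt_trans hb.
  rewrite ler_pdivrMr // => hv.
  have d1 : 0 < CC x a b - delta by rewrite subr_gt0.
  rewrite mulrAC ler_pdivrMr // -subr_ge0.
  have key : V * (CC x a b - CC x a s) - (FF x a s * (CC x a b - delta) + FF x a b * (delta - CC x a s))
    = (V - FF x a s) * (CC x a b - delta) - (FF x a b - V) * (delta - CC x a s) by ring.
  by rewrite -key subr_ge0.
have hl : (FF x a s - V) / (CC x a s - delta) <= lam.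
  by rewrite /lam; apply: (le_bigmax_cond _ (fun b => (FF x a b - V) / (CC x a b - delta))).
have d1 : 0 < CC x a s - delta by rewrite subr_gt0.
have q : (FF x a s - V) / (CC x a s - delta) * (CC x a s - delta) = FF x a s - V.
  by rewrite mulfVK // gt_eqF.
set r := (FF x a s - V) / (CC x a s - delta) in hl q.
nra.
Qed.


Lemma bigmaxE (F : X -> R) i : (forall j, F j <= F i) ->
  (\big[maxe/-oo]_(j : X) (F j)%:E = (F i)%:E)%E.
Proof.
move=> h; apply/eqP; rewrite eq_le; apply/andP; split.
  elim/big_rec: _ => [|j z _ hz]; first exact: leNye.
  by rewrite ge_max lee_fin h hz.
exact: (le_bigmax _ (fun j => (F j)%:E) i).
Qed.

Lemma sel lam : exists s : X -> X, forall y l, gfun lam y l <= gfun lam y (s y).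
Proof.
have [s hs] := choice (fun y => exists_argmax (gfun lam y) y).
by exists s.
Qed.

Lemma dual_obj_E x a lam s : (forall y l, gfun lam y l <= gfun lam y (s y)) ->
  dual_obj pos E U P pi delta x a lam =
  (lam * delta + \sum_(y : X) gfun lam y (s y) * P x a y)%:E.
Proof.
move=> hs; rewrite /dual_obj EFinD -sumEFin; congr (_ + _)%E.
apply: eq_bigr => y _; rewrite EFinM; congr (_ * _)%E.
rewrite -(bigmaxE (hs y)); apply: eq_bigr => l _.
under eq_bigr => a' _ do rewrite rQ_fin -EFinM.
by rewrite sumEFin -!EFinD.
Qed.

Theorem main_sec x a : x \in H ->
  rQ x a = ereal_inf [set dual_obj pos E U P pi delta x a lam | lam in [set l : R | 0 <= l]].
Proof.
move=> xH; apply/eqP; rewrite eq_le; apply/andP; split.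
  apply: le_ereal_inf_tmp => _ [lam lam0 <-].
  have [s hs] := sel lam; rewrite (dual_obj_E x a hs).
  apply: ge_ereal_sup => _ [Pt hPt <-].
  apply: ge_ereal_sup => _ [n _ <-]; rewrite lee_fin.
  have pB := amb_B a hPt xH; have [[p0 _] _] := pB.
  apply: le_trans (_ : step 1 (Pt x a) RQ <= _).
    case: n => [|n]; first by apply: step_ge0 => // y b; case/andP: (RQ_good.1 y b).
    rewrite Qfin_S xH; apply: step_mono => // y b; exact: Qfin_le_RQ.
  rewrite step1_f; exact: weak_dual pB lam0 hs.
have [lam [lam0 [p [pB hp]]]] := strong_dual a xH.
have [s hs] := sel lam.
apply: le_trans (ereal_inf_lbound _) _; first by exists lam.
rewrite (dual_obj_E x a hs) rQ_fin lee_fin.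
pose sf : {ffun X -> X} := [ffun y => s y].
have -> : lam * delta + \sum_(y : X) gfun lam y (s y) * P x a y =
          FF x a sf + lam * (delta - CC x a sf).
  have e : \sum_(y : X) gfun lam y (s y) * P x a y = FF x a sf - lam * CC x a sf.
    rewrite /FF /CC mulr_sumr -sumrB; apply: eq_bigr => y _.
    by rewrite ffunE /gfun /f; ring.
  rewrite e; ring.
apply: le_trans (hp sf) _; rewrite -step1_f.
exact: bellman_lower xH pB.
Qed.

End Main.

Theorem mainTheorem4 (R : realType) (X A : finType) (pos : X -> R)
  (E U : {set X}) (P : X -> A -> X -> R) (pi : X -> A -> R) (delta : R)
  (pos_inj : injective pos)
  (EU_disj : disjointEU E U)
  (P_prob : forall x a, x \in Hset E U -> is_prob (P x a))
  (pi_prob : forall x, is_prob (pi x))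
  (delta_ge0 : 0 <= delta)
  (x : X) (a : A) (xH : x \in Hset E U) :
  robustQ pos E U P pi delta x a =
  ereal_inf [set dual_obj pos E U P pi delta x a lam | lam in [set l : R | 0 <= l]].
Proof. exact: main_sec. Qed.
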